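(* (1) For every Priestley space $X$, the lattices $\Phi(\mathcal{E}(X))$ and $\mathcal{E}(X\times \underline{2})$ are isomorphic as bounded lattices. (2) For every bounded distributive lattice $L$, the Priestley spaces $\mathcal{X}(\Phi(L))$ and $\mathcal{X}(L)\times\underline{2}$ are isomorphic in the category of Priestley spaces (i.e. there is an order-isomorphism that is a homeomorphism).
   Context: A Priestley space is a poset $(X,\le)$ with a compact topology such that whenever $x\not\ge y$ there is a clopen down-set $U$ with $x\in U$, $y\notin U$. $\mathcal{E}(X)$ is the bounded distributive lattice of clopen down-sets of $X$ ordered by inclusion. For a bounded distributive lattice $L$, $\mathcal{X}(L)$ is the set of prime ideals of $L$ ordered by inclusion, with topology generated by the sets $X_a=\{I: a\notin I\}$ and their complements, $a\in L$. $\underline{2}$ is the two-element chain $\{0<1\}$ with the discrete topology; products of Priestley spaces carry the product topology and coordinatewise order. For a lattice $L$, $\Phi(L)=\{(a,b)\in L\times L: a\le b\}$ with coordinatewise order, a $(0,1)$-sublattice of $L\times L$. Priestley duality: $L\cong\mathcal{E}(\mathcal{X}(L))$ and $X\cong\mathcal{X}(\mathcal{E}(X))$ naturally. *)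

(* Defs.v *)
From Stdlib Require Import List Classical FunctionalExtensionality
  PropExtensionality ProofIrrelevance.
Import ListNotations.
Set Implicit Arguments.

Record OTS := {
  pt :> Type;
  ole : pt -> pt -> Prop;
  open : (pt -> Prop) -> Prop;
  open_full : open (fun _ => True);
  open_union : forall F : (pt -> Prop) -> Prop,
      (forall U, F U -> open U) -> open (fun x => exists U, F U /\ U x);
  open_inter : forall U V, open U -> open V -> open (fun x => U x /\ V x)
}.
Arguments ole {_} _ _.
Arguments open {_} _.

Definition clopen {X : OTS} (U : X -> Prop) :=
  open U /\ open (fun x => ~ U x).

Definition down_set {X : OTS} (U : X -> Prop) :=
  forall x y, ole x y -> U y -> U x.

Definition clopen_down {X : OTS} (U : X -> Prop) :=
  clopen U /\ down_set U.

Definition compact (X : OTS) :=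
  forall F : (X -> Prop) -> Prop,
    (forall U, F U -> open U) -> (forall x, exists U, F U /\ U x) ->
    exists l : list (X -> Prop), Forall F l /\ (forall x, exists U, In U l /\ U x).

Definition partial_order (X : OTS) :=
  (forall x : X, ole x x) /\
  (forall x y z : X, ole x y -> ole y z -> ole x z) /\
  (forall x y : X, ole x y -> ole y x -> x = y).

Definition priestley (X : OTS) :=
  partial_order X /\ compact X /\
  forall x y : X, ~ ole y x ->
    exists U, clopen_down U /\ U x /\ ~ U y.

Definition gen_open (T : Type) (S : (T -> Prop) -> Prop) (U : T -> Prop) :=
  forall x, U x -> exists l : list (T -> Prop),
    Forall S l /\ (forall V, In V l -> V x) /\
    (forall y, (forall V, In V l -> V y) -> U y).

Lemma gen_open_full T S : @gen_open T S (fun _ => True).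
Proof. intros x _; exists nil; repeat split; auto; intros V H; destruct H. Qed.

Lemma gen_open_union T S : forall F : (T -> Prop) -> Prop,
  (forall U, F U -> gen_open S U) -> gen_open S (fun x => exists U, F U /\ U x).
Proof.
  intros F HF x [U [HU Ux]].
  destruct (HF U HU x Ux) as [l [H1 [H2 H3]]].
  exists l; repeat split; auto.
  intros y Hy; exists U; split; auto.
Qed.

Lemma gen_open_inter T S U V :
  @gen_open T S U -> gen_open S V -> gen_open S (fun x => U x /\ V x).
Proof.
  intros HU HV x [Ux Vx].
  destruct (HU x Ux) as [l1 [A1 [B1 C1]]].
  destruct (HV x Vx) as [l2 [A2 [B2 C2]]].
  exists (l1 ++ l2); split; [|split].
  - apply Forall_app; split; auto.
  - intros W HW; apply in_app_or in HW; destruct HW as [HW|HW]; [apply B1|apply B2]; exact HW.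
  - intros y H; split.
    + apply C1; intros W HW; apply H; apply in_or_app; auto.
    + apply C2; intros W HW; apply H; apply in_or_app; auto.
Qed.

Definition gen_OTS (T : Type) (le : T -> T -> Prop) (S : (T -> Prop) -> Prop) : OTS :=
  {| pt := T; ole := le; open := gen_open S;
     open_full := gen_open_full S;
     open_union := @gen_open_union T S;
     open_inter := @gen_open_inter T S |}.

Definition prod_OTS (X Y : OTS) : OTS :=
  gen_OTS (fun p q : X * Y => ole (fst p) (fst q) /\ ole (snd p) (snd q))
    (fun W => (exists U : X -> Prop, open U /\ W = fun p => U (fst p)) \/
              (exists V : Y -> Prop, open V /\ W = fun p => V (snd p))).

(* The two-element chain 0 < 1 (false < true) with the discrete topology. *)
Definition two : OTS :=
  {| pt := bool; ole := fun b c => b = true -> c = true;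
     open := fun _ => True;
     open_full := I;
     open_union := fun _ _ => I;
     open_inter := fun _ _ _ _ => I |}.

Definition ots_iso (X Y : OTS) :=
  exists (f : X -> Y) (g : Y -> X),
    (forall x, g (f x) = x) /\ (forall y, f (g y) = y) /\
    (forall x x', ole x x' <-> ole (f x) (f x')) /\
    (forall U : X -> Prop, open U <-> open (fun y => U (g y))).

Record BDL := {
  car :> Type;
  meet : car -> car -> car;
  join : car -> car -> car;
  bot : car;
  top : car;
  meetC : forall a b, meet a b = meet b a;
  joinC : forall a b, join a b = join b a;
  meetA : forall a b c, meet a (meet b c) = meet (meet a b) c;
  joinA : forall a b c, join a (join b c) = join (join a b) c;
  absorb1 : forall a b, meet a (join a b) = a;
  absorb2 : forall a b, join a (meet a b) = a;
  distr : forall a b c, meet a (join b c) = join (meet a b) (meet a c);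
  meet_top : forall a, meet a top = a;
  join_bot : forall a, join a bot = a
}.
Arguments meet {_} _ _.
Arguments join {_} _ _.
Arguments bot {_}.
Arguments top {_}.
Arguments meetC {_} _ _.
Arguments joinC {_} _ _.
Arguments meetA {_} _ _ _.
Arguments joinA {_} _ _ _.
Arguments absorb1 {_} _ _.
Arguments absorb2 {_} _ _.
Arguments distr {_} _ _ _.
Arguments meet_top {_} _.
Arguments join_bot {_} _.

Definition bleq {L : BDL} (a b : L) := meet a b = a.

Definition bl_iso (L M : BDL) :=
  exists (f : L -> M) (g : M -> L),
    (forall x, g (f x) = x) /\ (forall y, f (g y) = y) /\
    (forall a b, f (meet a b) = meet (f a) (f b)) /\
    (forall a b, f (join a b) = join (f a) (f b)) /\
    f bot = bot /\ f top = top.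

Lemma sig_pred_eq (X : Type) (P : (X -> Prop) -> Prop) (a b : {U | P U}) :
  (forall x, proj1_sig a x <-> proj1_sig b x) -> a = b.
Proof.
  destruct a as [A HA], b as [B HB]; simpl; intros H.
  assert (A = B) by (apply functional_extensionality; intro x;
                     apply propositional_extensionality; auto).
  subst; f_equal; apply proof_irrelevance.
Qed.

Lemma open_empty (X : OTS) : @open X (fun _ => False).
Proof.
  assert (H := @open_union X (fun _ => False) (fun U (h : False) => match h with end)).
  replace (fun _ : X => False) with (fun x : X => exists U : X -> Prop, False /\ U x);
    auto.
  apply functional_extensionality; intro x; apply propositional_extensionality.
  split; [intros [U [[] _]] | intros []].
Qed.

Lemma open_ext (X : OTS) (U V : X -> Prop) :
  (forall x, U x <-> V x) -> open U -> open V.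
Proof.
  intros H HU; replace V with U; auto.
  apply functional_extensionality; intro; apply propositional_extensionality; auto.
Qed.

Lemma open_bunion (X : OTS) (U V : X -> Prop) :
  open U -> open V -> open (fun x => U x \/ V x).
Proof.
  intros HU HV.
  apply (@open_ext X (fun x => exists W, (W = U \/ W = V) /\ W x)).
  - intro x; split.
    + intros [W [[-> | ->] HW]]; auto.
    + intros [H|H]; [exists U | exists V]; auto.
  - apply open_union; intros W [-> | ->]; auto.
Qed.

Section EX.
Variable X : OTS.
Definition ECar := {U : X -> Prop | clopen_down U}.

Definition Emeet (a b : ECar) : ECar.
Proof.
  exists (fun x => proj1_sig a x /\ proj1_sig b x).
  destruct a as [A [[A1 A2] A3]], b as [B [[B1 B2] B3]]; simpl.
  split; [split|].
  - apply open_inter; auto.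
  - apply (@open_ext X (fun x => ~ A x \/ ~ B x)).
    + intro x; tauto.
    + apply open_bunion; auto.
  - intros x y Hxy [Ay By]; split; eauto.
Defined.

Definition Ejoin (a b : ECar) : ECar.
Proof.
  exists (fun x => proj1_sig a x \/ proj1_sig b x).
  destruct a as [A [[A1 A2] A3]], b as [B [[B1 B2] B3]]; simpl.
  split; [split|].
  - apply open_bunion; auto.
  - apply (@open_ext X (fun x => ~ A x /\ ~ B x)).
    + intro x; tauto.
    + apply open_inter; auto.
  - intros x y Hxy [Ay | By]; eauto.
Defined.

Definition Ebot : ECar.
Proof.
  exists (fun _ => False); split; [split|].
  - apply open_empty.
  - apply (@open_ext X (fun _ => True)); [tauto | apply open_full].
  - intros x y _ H; exact H.
Defined.

Definition Etop : ECar.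
Proof.
  exists (fun _ => True); split; [split|].
  - apply open_full.
  - apply (@open_ext X (fun _ => False)); [tauto | apply open_empty].
  - intros x y _ H; exact H.
Defined.

Ltac Esolve := intros; apply sig_pred_eq; simpl; intros; tauto.

Definition E : BDL.
Proof.
  refine {| car := ECar; meet := Emeet; join := Ejoin; bot := Ebot; top := Etop |};
  Esolve.
Defined.
End EX.

Section Phi.
Variable L : BDL.

Lemma meet_idem (a : L) : meet a a = a.
Proof.
  transitivity (meet a (join a (meet a a))).
  - f_equal; symmetry; apply absorb2.
  - apply absorb1.
Qed.

Lemma bleq_join (a b : L) : bleq a b -> join a b = b.
Proof.
  unfold bleq; intro H; rewrite <- H, joinC, meetC; apply absorb2.
Qed.

Lemma join_bleq (a b : L) : join a b = b -> bleq a b.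
Proof. unfold bleq; intro H; rewrite <- H; apply absorb1. Qed.

Lemma meet4 (a b c d : L) : meet (meet a b) (meet c d) = meet (meet a c) (meet b d).
Proof.
  rewrite <- (meetA a b), (meetA b c d), (meetC b c), <- (meetA c b d), meetA.
  reflexivity.
Qed.

Lemma join4 (a b c d : L) : join (join a b) (join c d) = join (join a c) (join b d).
Proof.
  rewrite <- (joinA a b), (joinA b c d), (joinC b c), <- (joinA c b d), joinA.
  reflexivity.
Qed.

Definition PCar := {p : L * L | bleq (fst p) (snd p)}.

Lemma phi_eq (a b : PCar) : proj1_sig a = proj1_sig b -> a = b.
Proof.
  destruct a, b; simpl; intros; subst; f_equal; apply proof_irrelevance.
Qed.

Definition Pmeet (a b : PCar) : PCar.
Proof.
  exists (meet (fst (proj1_sig a)) (fst (proj1_sig b)),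
          meet (snd (proj1_sig a)) (snd (proj1_sig b))).
  destruct a as [[a1 a2] Ha], b as [[b1 b2] Hb]; unfold bleq in *; simpl in *.
  rewrite meet4, Ha, Hb; reflexivity.
Defined.

Definition Pjoin (a b : PCar) : PCar.
Proof.
  exists (join (fst (proj1_sig a)) (fst (proj1_sig b)),
          join (snd (proj1_sig a)) (snd (proj1_sig b))).
  destruct a as [[a1 a2] Ha], b as [[b1 b2] Hb]; simpl in *.
  apply join_bleq; rewrite join4, (bleq_join Ha), (bleq_join Hb); reflexivity.
Defined.

Definition Pbot : PCar := exist _ (bot, bot) (meet_idem bot).
Definition Ptop : PCar := exist _ (top, top) (meet_idem top).

Ltac Psolve l :=
  intros; apply phi_eq;
  repeat match goal with p : PCar |- _ => destruct p as [[? ?] ?] end;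
  simpl; f_equal; apply l.

Definition Phi : BDL.
Proof.
  refine {| car := PCar; meet := Pmeet; join := Pjoin; bot := Pbot; top := Ptop |}.
  - Psolve (@meetC L).
  - Psolve (@joinC L).
  - Psolve (@meetA L).
  - Psolve (@joinA L).
  - Psolve (@absorb1 L).
  - Psolve (@absorb2 L).
  - Psolve (@distr L).
  - Psolve (@meet_top L).
  - Psolve (@join_bot L).
Defined.
End Phi.

Definition prime_ideal {L : BDL} (I : L -> Prop) :=
  I bot /\
  (forall a b, bleq a b -> I b -> I a) /\
  (forall a b, I a -> I b -> I (join a b)) /\
  ~ I top /\
  (forall a b, I (meet a b) -> I a \/ I b).

Definition Xspec (L : BDL) : OTS :=
  gen_OTS (fun I J : {I : L -> Prop | prime_ideal I} =>
             forall a, proj1_sig I a -> proj1_sig J a)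
    (fun W => exists a : L,
        W = (fun I => ~ proj1_sig I a) \/ W = (fun I => proj1_sig I a)).

(* Main.v *)
Require Import Defs.
From Stdlib Require Import List Classical FunctionalExtensionality
  PropExtensionality ProofIrrelevance ClassicalDescription.
Import ListNotations.

Lemma open_const (Y : OTS) (Q : Prop) : @open Y (fun _ => Q).
Proof.
  destruct (classic Q) as [h|h].
  - apply (@open_ext Y (fun _ => True)); [intros; tauto | apply open_full].
  - apply (@open_ext Y (fun _ => False)); [intros; tauto | apply open_empty].
Qed.

Lemma open_list_inter (Y : OTS) T (P : (T -> Prop) -> Prop) (k : (T -> Prop) -> Y -> Prop) :
  (forall W, P W -> open (k W)) ->
  forall l, Forall P l -> open (fun y => forall W, In W l -> k W y).
Proof.
  intros Hk l; induction l as [|W l IH]; intros H.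
  - apply (@open_ext Y (fun _ => True)); [intros; split; [intros _ W []|auto] | apply open_full].
  - inversion H as [|? ? HW Hl]; subst.
    apply (@open_ext Y (fun y => k W y /\ (forall V, In V l -> k V y))).
    + intros y; split.
      * intros [H1 H2] V [<-|HV]; auto.
      * intros H1; split; [apply H1; left; auto | intros V HV; apply H1; right; auto].
    + apply open_inter; auto.
Qed.

Lemma gen_cont (Y : OTS) T (S : (T -> Prop) -> Prop) (h : Y -> T) :
  (forall W, S W -> open (fun y => W (h y))) ->
  forall U, gen_open S U -> open (fun y => U (h y)).
Proof.
  intros HS U HU.
  apply (@open_ext Y (fun y => exists V, (exists l, Forall S l /\
      (forall t, (forall W, In W l -> W t) -> U t) /\
      V = (fun y => forall W, In W l -> W (h y))) /\ V y)).
  - intros y; split.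
    + intros [V [[l [Hl [HU' ->]]] HV]]. apply HU'. exact HV.
    + intros Hy. destruct (HU _ Hy) as [l [Hl [Hx Hsub]]].
      exists (fun y => forall W, In W l -> W (h y)). split; [exists l; auto | exact Hx].
  - apply open_union. intros V [l [Hl [_ ->]]].
    apply (@open_list_inter Y T S (fun W y => W (h y))); auto.
Qed.

Lemma gen_open_sub T (S : (T -> Prop) -> Prop) W : S W -> gen_open S W.
Proof.
  intros HW x Hx; exists [W]; split; [constructor; auto | split].
  - intros V [<-|[]]; auto.
  - intros y Hy; apply Hy; left; auto.
Qed.

Definition isT (b : bool) : Prop := if b then True else False.
Definition isF (b : bool) : Prop := if b then False else True.

Lemma open_fst (X : OTS) (U : X -> Prop) : open U -> @open (prod_OTS X two) (fun p => U (fst p)).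
Proof. intros HU. apply gen_open_sub. left. exists U. auto. Qed.

Lemma open_snd (X : OTS) (V : bool -> Prop) : @open (prod_OTS X two) (fun p => V (snd p)).
Proof. apply gen_open_sub. right. exists V. split; [exact I|reflexivity]. Qed.

Definition Fset (X : OTS) (p : Phi (E X)) : prod_OTS X two -> Prop :=
  fun q => if snd q then proj1_sig (fst (proj1_sig p)) (fst q)
           else proj1_sig (snd (proj1_sig p)) (fst q).

Lemma Fset_cd (X : OTS) p : clopen_down (Fset X p).
Proof.
  destruct p as [[[A [[A1 A2] A3]] [B [[B1 B2] B3]]] Hab].
  assert (HAB : forall x, A x -> B x).
  { intros x Ha. pose proof (f_equal (fun s : ECar X => proj1_sig s x) Hab) as H.
    simpl in H. assert (A x /\ B x) by (rewrite H; exact Ha). tauto. }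
  unfold Fset; simpl.
  split; [split|].
  - refine (@open_ext (prod_OTS X two)
      (fun q => (A (fst q) /\ isT (snd q)) \/ (B (fst q) /\ isF (snd q))) _ _ _).
    + intros [x b]; destruct b; simpl; tauto.
    + apply open_bunion; apply open_inter; auto using open_fst, open_snd.
  - refine (@open_ext (prod_OTS X two)
      (fun q => (~ A (fst q) /\ isT (snd q)) \/ (~ B (fst q) /\ isF (snd q))) _ _ _).
    + intros [x b]; destruct b; simpl; tauto.
    + apply open_bunion; apply open_inter; auto using open_fst, open_snd;
      apply (open_fst X (fun x => ~ _ x)); assumption.
  - intros [x b] [y c] [Hxy Hbc] H; simpl in *.
    destruct b, c; simpl in *; eauto.
    specialize (Hbc eq_refl); discriminate.
Qed.

Definition Fm (X : OTS) (p : Phi (E X)) : E (prod_OTS X two) := exist _ (Fset X p) (Fset_cd X p).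

Definition slice (X : OTS) (U : E (prod_OTS X two)) (b : bool) : X -> Prop :=
  fun x => proj1_sig U (x, b).

Lemma slice_open (X : OTS) (U : prod_OTS X two -> Prop) b :
  open U -> open (fun x => U (x, b)).
Proof.
  intros HU. refine (@gen_cont X _ _ (fun x : X => (x, b)) _ U HU).
  intros W [[V [HV ->]] | [V [HV ->]]]; simpl.
  - exact HV.
  - apply open_const.
Qed.

Lemma slice_cd (X : OTS) U b : clopen_down (slice X U b).
Proof.
  destruct U as [U [[U1 U2] U3]]; unfold slice; simpl.
  split; [split|].
  - apply (slice_open X U b U1).
  - apply (slice_open X (fun q => ~ U q) b U2).
  - intros x y Hxy H. apply (U3 (x, b) (y, b)); [split; simpl; auto|exact H].
Qed.

Lemma Gm_le (X : OTS) (refl : forall x : X, ole x x) U :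
  bleq (L := E X) (exist _ (slice X U true) (slice_cd X U true))
                  (exist _ (slice X U false) (slice_cd X U false)).
Proof.
  unfold bleq. apply sig_pred_eq; simpl; intro x; split; [tauto|].
  intro H; split; auto. unfold slice in *.
  destruct U as [U [[U1 U2] U3]]; simpl in *.
  apply (U3 (x, false) (x, true)); [split; simpl; auto; intros; discriminate|exact H].
Qed.

Definition Gm (X : OTS) (refl : forall x : X, ole x x) (U : E (prod_OTS X two)) : Phi (E X) :=
  exist _ (exist _ (slice X U true) (slice_cd X U true),
           exist _ (slice X U false) (slice_cd X U false)) (Gm_le X refl U).

Lemma part1 (X : OTS) : priestley X -> bl_iso (Phi (E X)) (E (prod_OTS X two)).
Proof.
  intros [[refl _] _].
  exists (Fm X), (Gm X refl).
  split; [|split; [|split; [|split; [|split]]]].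
  - intros [[A B] H]. apply phi_eq; simpl. f_equal.
    + destruct A; apply sig_pred_eq; simpl; unfold slice; simpl; tauto.
    + destruct B; apply sig_pred_eq; simpl; unfold slice; simpl; tauto.
  - intros U. apply sig_pred_eq; intros [x b]; destruct b; simpl; unfold slice; tauto.
  - intros [[A B] H] [[C D] K]. apply sig_pred_eq; intros [x b]; destruct b; simpl; unfold Fset; simpl; tauto.
  - intros [[A B] H] [[C D] K]. apply sig_pred_eq; intros [x b]; destruct b; simpl; unfold Fset; simpl; tauto.
  - apply sig_pred_eq; intros [x b]; destruct b; simpl; unfold Fset; simpl; tauto.
  - apply sig_pred_eq; intros [x b]; destruct b; simpl; unfold Fset; simpl; tauto.
Qed.

Lemma join_top (L : BDL) (a : L) : join a top = top.
Proof.
  transitivity (join top (meet top a)); [rewrite (meetC top a), meet_top; apply joinC | apply absorb2].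
Qed.

Lemma meet_bot (L : BDL) (a : L) : meet a bot = bot.
Proof.
  transitivity (meet bot (join bot a)); [rewrite (joinC bot a), join_bot; apply meetC | apply absorb1].
Qed.

Definition PI (L : BDL) := {I : L -> Prop | prime_ideal I}.
Definition QI (L : BDL) := {I : Phi L -> Prop | prime_ideal I}.

Definition diag (L : BDL) (a : L) : Phi L := exist _ (a, a) (meet_idem L a).
Definition bt (L : BDL) : Phi L := exist _ (bot, top) (meet_top bot).

Lemma phi_le (L : BDL) (p q : Phi L) :
  meet (fst (proj1_sig p)) (fst (proj1_sig q)) = fst (proj1_sig p) ->
  meet (snd (proj1_sig p)) (snd (proj1_sig q)) = snd (proj1_sig p) -> bleq p q.
Proof.
  intros H1 H2. unfold bleq. apply phi_eq.
  destruct p as [[a b] Hp], q as [[c d] Hq]. simpl in *. rewrite H1, H2. reflexivity.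
Qed.

Lemma phi_le_inv (L : BDL) (p q : Phi L) : bleq p q ->
  meet (fst (proj1_sig p)) (fst (proj1_sig q)) = fst (proj1_sig p) /\
  meet (snd (proj1_sig p)) (snd (proj1_sig q)) = snd (proj1_sig p).
Proof.
  intros H. apply (f_equal (@proj1_sig _ _)) in H.
  destruct p as [[a b] Hp], q as [[c d] Hq]. simpl in *. injection H; auto.
Qed.

Lemma pi1_prime (L : BDL) (I : PI L) :
  prime_ideal (fun p : Phi L => proj1_sig I (fst (proj1_sig p))).
Proof.
  destruct I as [I [H0 [Hd [Hj [Ht Hm]]]]]; simpl.
  split; [|split; [|split; [|split]]].
  - exact H0.
  - intros a b Hab. apply phi_le_inv in Hab. destruct Hab as [Hab _]. apply Hd. exact Hab.
  - intros [[a1 a2] Ha] [[b1 b2] Hb]; simpl. apply Hj.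
  - exact Ht.
  - intros [[a1 a2] Ha] [[b1 b2] Hb]; simpl. apply Hm.
Qed.

Lemma pi2_prime (L : BDL) (I : PI L) :
  prime_ideal (fun p : Phi L => proj1_sig I (snd (proj1_sig p))).
Proof.
  destruct I as [I [H0 [Hd [Hj [Ht Hm]]]]]; simpl.
  split; [|split; [|split; [|split]]].
  - exact H0.
  - intros a b Hab. apply phi_le_inv in Hab. destruct Hab as [_ Hab]. apply Hd. exact Hab.
  - intros [[a1 a2] Ha] [[b1 b2] Hb]; simpl. apply Hj.
  - exact Ht.
  - intros [[a1 a2] Ha] [[b1 b2] Hb]; simpl. apply Hm.
Qed.

Definition pi1 (L : BDL) (I : PI L) : QI L := exist _ _ (pi1_prime L I).
Definition pi2 (L : BDL) (I : PI L) : QI L := exist _ _ (pi2_prime L I).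

Definition gmap (L : BDL) (x : PI L * bool) : QI L :=
  if snd x then pi1 L (fst x) else pi2 L (fst x).

Lemma diag_prime (L : BDL) (P : QI L) :
  prime_ideal (fun a : L => proj1_sig P (diag L a)).
Proof.
  destruct P as [P [H0 [Hd [Hj [Ht Hm]]]]]; simpl.
  split; [|split; [|split; [|split]]].
  - exact H0.
  - intros a b Hab. apply Hd. apply phi_le; simpl; exact Hab.
  - intros a b Ha Hb. specialize (Hj _ _ Ha Hb).
    replace (diag L (join a b)) with (join (diag L a) (diag L b)); [exact Hj|].
    apply phi_eq; reflexivity.
  - exact Ht.
  - intros a b Hab. apply Hm.
    replace (meet (diag L a) (diag L b)) with (diag L (meet a b)); [exact Hab|].
    apply phi_eq; reflexivity.
Qed.

Definition diagI (L : BDL) (P : QI L) : PI L := exist _ _ (diag_prime L P).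

Definition fmap (L : BDL) (P : QI L) : PI L * bool :=
  (diagI L P, if excluded_middle_informative (proj1_sig P (bt L)) then true else false).

Lemma fg (L : BDL) y : fmap L (gmap L y) = y.
Proof.
  destruct y as [[I [H0 [Hd [Hj [Ht Hm]]]]] b]. unfold fmap, gmap; f_equal.
  - apply sig_pred_eq; intro a; destruct b; simpl; tauto.
  - destruct b; simpl; destruct excluded_middle_informative as [h|h]; simpl in h;
      auto; tauto.
Qed.

Lemma gf (L : BDL) P : gmap L (fmap L P) = P.
Proof.
  unfold fmap, gmap; simpl.
  destruct P as [P HP].
  pose proof HP as [H0 [Hd [Hj [Ht Hm]]]].
  destruct excluded_middle_informative as [h|h]; simpl in h; simpl;
    apply sig_pred_eq; intros [[c1 c2] Hc]; simpl; split; intro H.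
  - (* P (c1,c1) -> P (c1,c2) *)
    apply (Hd _ (join (diag L c1) (bt L))); [apply phi_le; simpl|].
    + rewrite join_bot. apply meet_idem.
    + rewrite join_top. apply meet_top.
    + apply Hj; auto.
  - apply (Hd _ (exist _ (c1, c2) Hc)); [apply phi_le; simpl|exact H].
    + apply meet_idem.
    + exact Hc.
  - (* P (c2,c2) -> P (c1,c2) *)
    apply (Hd _ (diag L c2)); [apply phi_le; simpl|exact H].
    + exact Hc.
    + apply meet_idem.
  - destruct (Hm (diag L c2) (bt L)) as [H'|H']; [|exact H'|contradiction].
    apply (Hd _ (exist _ (c1, c2) Hc)); [apply phi_le; simpl|exact H].
    + rewrite meet_bot, meetC. apply meet_bot.
    + rewrite meet_top. apply meet_idem.
Qed.

Lemma gle (L : BDL) (y y' : PI L * bool) :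
  (forall c, proj1_sig (gmap L y) c -> proj1_sig (gmap L y') c) <->
  ((forall a, proj1_sig (fst y) a -> proj1_sig (fst y') a) /\
   (snd y = true -> snd y' = true)).
Proof.
  destruct y as [[I HI] b], y' as [[J HJ] b']; simpl.
  pose proof HI as [H0 [Hd [Hj [Ht Hm]]]].
  pose proof HJ as [K0 [Kd [Kj [Kt Km]]]].
  destruct b, b'; simpl; split.
  - intros H; split; auto. intros a Ha. apply (H (diag L a)). exact Ha.
  - intros [H _] c. apply H.
  - intros H. exfalso. apply Kt. apply (H (bt L)). exact H0.
  - intros [_ H]. discriminate (H eq_refl).
  - intros H; split; [|discriminate]. intros a Ha. apply (H (diag L a)). exact Ha.
  - intros [H _] [[c1 c2] Hc]; simpl. intro Hc2. apply H. apply (Hd _ c2); auto.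
  - intros H; split; auto. intros a Ha. apply (H (diag L a)). exact Ha.
  - intros [H _] c. apply H.
Qed.

Lemma part2 (L : BDL) : ots_iso (Xspec (Phi L)) (prod_OTS (Xspec L) two).
Proof.
  exists (fmap L), (gmap L).
  split; [exact (gf L)|split; [exact (fg L)|split]].
  - intros x x'. pose proof (gle L (fmap L x) (fmap L x')) as H.
    rewrite !gf in H. exact H.
  - intros U; split; intro HU.
    + refine (@gen_cont (prod_OTS (Xspec L) two) _ _ (gmap L) _ U HU).
      intros W [c [-> | ->]].
      * refine (@open_ext (prod_OTS (Xspec L) two)
          (fun y => (~ proj1_sig (fst y) (fst (proj1_sig c)) /\ isT (snd y)) \/
                    (~ proj1_sig (fst y) (snd (proj1_sig c)) /\ isF (snd y))) _ _ _).
        -- intros [I b]; destruct b; simpl; tauto.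
        -- apply open_bunion; apply open_inter; try apply open_snd.
           ++ apply (open_fst (Xspec L) (fun I : Xspec L => ~ proj1_sig I (fst (proj1_sig c)))).
              apply gen_open_sub; eauto.
           ++ apply (open_fst (Xspec L) (fun I : Xspec L => ~ proj1_sig I (snd (proj1_sig c)))).
              apply gen_open_sub; eauto.
      * refine (@open_ext (prod_OTS (Xspec L) two)
          (fun y => (proj1_sig (fst y) (fst (proj1_sig c)) /\ isT (snd y)) \/
                    (proj1_sig (fst y) (snd (proj1_sig c)) /\ isF (snd y))) _ _ _).
        -- intros [I b]; destruct b; simpl; tauto.
        -- apply open_bunion; apply open_inter; try apply open_snd.
           ++ apply (open_fst (Xspec L) (fun I : Xspec L => proj1_sig I (fst (proj1_sig c)))).
              apply gen_open_sub; eauto.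
           ++ apply (open_fst (Xspec L) (fun I : Xspec L => proj1_sig I (snd (proj1_sig c)))).
              apply gen_open_sub; eauto.
    + refine (@open_ext (Xspec (Phi L)) (fun P => U (gmap L (fmap L P))) _ _ _).
      { intros P; rewrite gf; tauto. }
      refine (@gen_cont (Xspec (Phi L)) _ _ (fmap L) _ (fun y => U (gmap L y)) HU).
      intros W [[V [HV ->]] | [V [HV ->]]]; simpl.
      * refine (@gen_cont (Xspec (Phi L)) _ _ (diagI L) _ V HV).
        intros W [a [-> | ->]]; apply gen_open_sub; exists (diag L a); auto.
      * refine (@open_ext (Xspec (Phi L))
          (fun P => (V true /\ proj1_sig P (bt L)) \/ (V false /\ ~ proj1_sig P (bt L))) _ _ _).
        -- intros P; destruct excluded_middle_informative; tauto.
        -- apply open_bunion; apply open_inter; try apply open_const;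
             apply gen_open_sub; eauto.
Qed.

Theorem lemma4 :
  (forall X : OTS, priestley X -> bl_iso (Phi (E X)) (E (prod_OTS X two))) /\
  (forall L : BDL, ots_iso (Xspec (Phi L)) (prod_OTS (Xspec L) two)).
Proof. split; [exact part1 | exact part2]. Qed.
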